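(* Let $L_1,L_2>0$, $N_{\max}\ge1$, $M>0$, $\bar c\in(0,1)$, and let $t^*$ be the unique positive solution of $e^{L_2t^*}-\big(L_2+\frac{L_2^2}{L_1\sqrt{N_{\max}}}\big)t^*-1=0$. Define $$\bar t:=\sup\Big\{t>0:\ e^{L_2t}-\Big(L_2+\bar c\frac{L_2^2}{L_1\sqrt{N_{\max}}}\Big)t-1<0\Big\}.$$ Then $0<\bar t<t^*$, and the functions $H_1(t):=Mt$, $H_\kappa(t):=\int_0^te^{L_2(t-s)}L_1\sqrt{N_{\max}}H_{\kappa-1}(s)\,ds$ ($\kappa\ge2$) satisfy $H_\kappa(t)\le\bar c^{\,\kappa-1}Mt$ for all $t\in[0,\bar t]$ and all $\kappa\ge1$. *)

(* Defs.v *)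
From Stdlib Require Import Reals Lra Classical ClassicalEpsilon.
Open Scope R_scope.

(* Total Riemann integral: RiemannInt when f is Riemann integrable on [a,b], 0 otherwise. *)
Definition Rint (f : R -> R) (a b : R) : R :=
  match excluded_middle_informative
          (exists v : R, exists pr : Riemann_integrable f a b, RiemannInt pr = v) with
  | left h => proj1_sig (constructive_indefinite_description _ h)
  | right _ => 0
  end.
(* RiemannInt does not depend on the integrability proof (RiemannInt_P5),
   so Rint f a b is the Riemann integral whenever f is integrable on [a,b]. *)

(* Hfun L1 L2 Nmax M k t = H_k(t) for k >= 1:
   H_1(t) = M t,  H_k(t) = int_0^t e^{L2 (t-s)} L1 sqrt(Nmax) H_{k-1}(s) ds  (k >= 2).
   The index k = 0 is a dummy, set equal to H_1. *)
Fixpoint Hfun (L1 L2 : R) (Nmax : nat) (M : R) (k : nat) : R -> R :=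
  match k with
  | O => fun t => M * t
  | S k' =>
      match k' with
      | O => fun t => M * t
      | S _ => fun t =>
          Rint (fun s => exp (L2 * (t - s)) * L1 * sqrt (INR Nmax)
                          * Hfun L1 L2 Nmax M k' s) 0 t
      end
  end.

(* Main.v *)
Require Import Defs.
From Stdlib Require Import Reals Lra Psatz Classical ClassicalEpsilon.
From Coquelicot Require Import Coquelicot.
Open Scope R_scope.
Open Scope R_scope.
Definition gg (a B t : R) := exp (a * t) - (a + B) * t - 1.

Lemma tangent a s u : exp (a * u) * (1 + a * s - a * u) <= exp (a * s).
Proof.
  replace (a * s) with (a * u + (a * s - a * u)) at 2 by ring.
  rewrite exp_plus. pose proof (exp_ineq1_le (a*s - a*u)). pose proof (exp_pos (a*u)).
  replace (1 + a * s - a * u) with (1 + (a*s - a*u)) by ring. nra.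
Qed.

Lemma upper a B u : 0 < u -> gg a B u > 0 ->
  exists v, v < u /\ forall s, 0 < s -> gg a B s < 0 -> s <= v.
Proof.
  intros hu hg. unfold gg in *.
  set (D := a * exp (a * u) - (a + B)).
  assert (H0 := tangent a 0 u). rewrite Rmult_0_r, exp_0 in H0.
  assert (HD : D * u > 0) by (unfold D; nra).
  assert (Dp : D > 0) by nra.
  exists (u - (exp (a * u) - (a + B) * u - 1) / D). split.
  - assert (0 < (exp (a * u) - (a + B) * u - 1) / D) by (apply Rdiv_lt_0_compat; lra). lra.
  - intros s hs hgs. pose proof (tangent a s u).
    assert (s * D <= u * D - (exp (a * u) - (a + B) * u - 1)) by (unfold D; nra).
    apply (Rmult_le_reg_r D); [lra|]. unfold Rminus at 1. rewrite Rmult_plus_distr_r.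
    replace (- ((exp (a * u) - (a + B) * u - 1) / D) * D) with (- (exp (a * u) - (a + B) * u - 1)) by (field; lra).
    lra.
Qed.

Lemma chord a B t s : 0 <= t -> t <= s -> gg a B t * s <= t * gg a B s.
Proof.
  intros h1 h2. unfold gg.
  pose proof (tangent a 0 t) as H0. rewrite Rmult_0_r, exp_0 in H0.
  pose proof (tangent a s t) as H1.
  assert (s * exp (a*t) - s <= t * exp (a*s) - t).
  { assert (A : (s - t) * (exp (a * t) * (1 + 0 - a * t)) <= (s - t) * 1) by (apply Rmult_le_compat_l; lra).
    assert (Bq : t * (exp (a * t) * (1 + a * s - a * t)) <= t * exp (a * s)) by (apply Rmult_le_compat_l; lra).
    nra. }
  nra.
Qed.

Lemma small a B : 0 < a -> 0 < B -> exists t, 0 < t /\ gg a B t < 0.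
Proof.
  intros ha hB.
  set (t0 := Rmin (/ (2 * a)) (B / (4 * a ^ 2))).
  assert (h1 : t0 <= / (2*a)) by apply Rmin_l.
  assert (h2 : t0 <= B / (4 * a ^ 2)) by apply Rmin_r.
  assert (hp : 0 < t0).
  { unfold t0. apply Rmin_glb_lt. apply Rinv_0_lt_compat; lra.
    apply Rdiv_lt_0_compat; nra. }
  exists t0. split; auto. unfold gg.
  set (x := a * t0).
  assert (hx : x <= / 2).
  { unfold x. apply (Rmult_le_compat_l a) in h1; [|lra].
    replace (a * / (2 * a)) with (/2) in h1 by (field; lra). lra. }
  assert (hx0 : 0 < x) by (unfold x; nra).
  assert (h2' : 4 * a^2 * t0 <= B).
  { apply (Rmult_le_compat_l (4 * a^2)) in h2; [|nra].
    replace (4 * a ^ 2 * (B / (4 * a ^ 2))) with B in h2 by (field; lra). lra. }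
  set (E := exp x).
  assert (HE : E * (1 - x) <= 1).
  { pose proof (exp_ineq1_le (- x)). pose proof (exp_pos x).
    assert (exp x * exp (-x) = 1) by (rewrite <- exp_plus; replace (x + - x) with 0 by ring; apply exp_0).
    unfold E. nra. }
  assert (HE2 : E <= 1 + x + 2 * x^2).
  { assert ((1 - x) * (1 + x + 2 * x^2) >= 1) by nra. nra. }
  assert (x^2 = a^2 * t0 * t0) by (unfold x; ring).
  assert (B * t0 >= 4 * a^2 * t0 * t0) by nra. unfold x in *. unfold E in *. nra.
Qed.

Lemma Rint_le f a b B : (forall pr : Riemann_integrable f a b, RiemannInt pr <= B) ->
  0 <= B -> Rint f a b <= B.
Proof.
  intros H H0. unfold Rint.
  destruct (excluded_middle_informative _) as [h|h]; [|exact H0].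
  destruct (constructive_indefinite_description _ h) as [v [pr Hv]]. simpl.
  rewrite <- Hv. apply H.
Qed.

Lemma int_bound (a C t : R) (ha : 0 < a) (ht : 0 <= t) :
  forall pr : Riemann_integrable (fun s => exp (a * (t - s)) * C * s) 0 t,
  RiemannInt pr = C * (exp (a * t) - 1 - a * t) / a ^ 2.
Proof.
  intros pr. rewrite <- RInt_Reals.
  set (F := fun s => C * (- (exp (a * (t - s)) * (a * s + 1)) / a ^ 2)).
  assert (HI : is_RInt (fun s => exp (a * (t - s)) * C * s) 0 t (minus (F t) (F 0))).
  { apply (is_RInt_derive F).
    - intros x _. unfold F. auto_derive; [auto|]. replace (t + - x) with (t - x) by ring. field. lra.
    - intros y _. apply (ex_derive_continuous (fun s => exp (a * (t - s)) * C * s)).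
      auto_derive. auto. }
  rewrite (is_RInt_unique _ _ _ _ HI). unfold F, minus, plus, opp; simpl.
  replace (t - t) with 0 by ring. replace (a*(t-0)) with (a*t) by ring.
  rewrite Rmult_0_r, exp_0. field. lra.
Qed.

Lemma int_ex (a C t : R) (ha : 0 < a) :
  Riemann_integrable (fun s => exp (a * (t - s)) * C * s) 0 t.
Proof.
  apply ex_RInt_Reals_0. apply (ex_RInt_continuous (V:=R_CompleteNormedModule)).
  intros y _. apply (ex_derive_continuous (fun s => exp (a * (t - s)) * C * s)).
  auto_derive. auto.
Qed.

Theorem mainTheorem6 (L1 L2 : R) (Nmax : nat) (M cbar tstar tbar : R)
  (hL1 : 0 < L1) (hL2 : 0 < L2) (hN : (1 <= Nmax)%nat) (hM : 0 < M)
  (hc0 : 0 < cbar) (hc1 : cbar < 1)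
  (htpos : 0 < tstar)
  (htroot : exp (L2 * tstar) - (L2 + L2 ^ 2 / (L1 * sqrt (INR Nmax))) * tstar - 1 = 0)
  (htuniq : forall t, 0 < t ->
     exp (L2 * t) - (L2 + L2 ^ 2 / (L1 * sqrt (INR Nmax))) * t - 1 = 0 -> t = tstar)
  (htbar : is_lub (fun t => 0 < t /\
     exp (L2 * t) - (L2 + cbar * (L2 ^ 2 / (L1 * sqrt (INR Nmax)))) * t - 1 < 0) tbar) :
  0 < tbar /\ tbar < tstar /\
  forall (k : nat) (t : R), (1 <= k)%nat -> 0 <= t <= tbar ->
    Hfun L1 L2 Nmax M k t <= cbar ^ (k - 1) * M * t.
Proof.
  assert (hNr : 1 <= INR Nmax) by (apply (le_INR 1); exact hN).
  assert (hs : 1 <= sqrt (INR Nmax)) by (rewrite <- sqrt_1; apply sqrt_le_1_alt; lra).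
  set (K := L1 * sqrt (INR Nmax)) in *.
  assert (hK : 0 < K) by (unfold K; nra).
  set (B1 := L2 ^ 2 / K) in *.
  assert (hB1 : 0 < B1) by (unfold B1; apply Rdiv_lt_0_compat; nra).
  set (B := cbar * B1) in *.
  assert (hB : 0 < B) by (unfold B; nra).
  destruct htbar as [hub hlub].
  assert (tb0 : 0 < tbar).
  { destruct (small L2 B hL2 hB) as [t0 [h0 h1]].
    assert (t0 <= tbar) by (apply hub; split; auto). lra. }
  assert (tbs : tbar < tstar).
  { assert (gg L2 B tstar > 0).
    { unfold gg. assert (0 < (1-cbar)*B1*tstar) by (apply Rmult_lt_0_compat; nra). unfold B. nra. }
    destruct (upper L2 B tstar htpos H) as [v [hv1 hv2]].
    assert (tbar <= v) by (apply hlub; intros s [h1 h2]; apply hv2; auto). lra. }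
  assert (gtb : gg L2 B tbar <= 0).
  { destruct (Rle_or_lt (gg L2 B tbar) 0) as [h|h]; auto.
    destruct (upper L2 B tbar tb0 h) as [v [hv1 hv2]].
    assert (tbar <= v) by (apply hlub; intros s [h1 h2]; apply hv2; auto). lra. }
  assert (gle : forall t, 0 <= t <= tbar -> gg L2 B t <= 0).
  { intros t [h1 h2]. pose proof (chord L2 B t tbar h1 h2).
    assert (t * gg L2 B tbar <= 0) by nra. nra. }
  split; [exact tb0|split; [exact tbs|]].
  intros k t hk. destruct k as [|n]; [lia|]. replace (S n - 1)%nat with n by lia.
  clear hk. revert t. induction n as [|n IH]; intros t ht.
  - simpl. lra.
  - change (Hfun L1 L2 Nmax M (S (S n)) t) with
      (Rint (fun s => exp (L2 * (t - s)) * L1 * sqrt (INR Nmax) * Hfun L1 L2 Nmax M (S n) s) 0 t).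
    assert (hcn : 0 <= cbar ^ n) by (apply pow_le; lra).
    apply Rint_le.
    + intros pr.
      set (C := K * (cbar ^ n * M)).
      pose proof (int_ex L2 C t hL2) as pr2.
      apply Rle_trans with (RiemannInt pr2).
      * apply RiemannInt_P19; [lra|]. intros x hx.
        assert (IHx := IH x ltac:(lra)).
        pose proof (exp_pos (L2 * (t - x))).
        replace (exp (L2 * (t - x)) * L1 * sqrt (INR Nmax) * Hfun L1 L2 Nmax M (S n) x) with ((exp (L2 * (t - x)) * K) * Hfun L1 L2 Nmax M (S n) x) by (unfold K; ring).
        replace (exp (L2 * (t - x)) * C * x) with ((exp (L2 * (t - x)) * K) * (cbar ^ n * M * x)) by (unfold C; ring).
        apply Rmult_le_compat_l; [nra | exact IHx].
      * rewrite (int_bound L2 C t hL2 (proj1 ht) pr2).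
        assert (hg := gle t ht). unfold gg in hg.
        set (D := exp (L2 * t) - 1 - L2 * t).
        assert (hD : K * D <= cbar * L2^2 * t).
        { assert (D <= B * t) by (unfold D; lra).
          apply Rle_trans with (K * (B * t)). apply Rmult_le_compat_l; lra.
          unfold B, B1. right. field. lra. }
        unfold C. replace (cbar ^ S n * M * t) with (cbar * cbar ^ n * M * t) by (simpl; ring).
        replace (K * (cbar ^ n * M) * D / L2 ^ 2) with ((cbar ^ n * M) * (K * D) / L2^2) by (field; lra).
        apply (Rmult_le_reg_r (L2^2)); [nra|].
        replace (cbar ^ n * M * (K * D) / L2 ^ 2 * L2 ^ 2) with ((cbar ^ n * M) * (K * D)) by (field; lra).
        replace (cbar * cbar ^ n * M * t * L2 ^ 2) with ((cbar ^ n * M) * (cbar * L2^2 * t)) by ring.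
        apply Rmult_le_compat_l; nra.
    + simpl. assert (0 <= cbar * cbar ^ n) by nra. apply Rmult_le_pos; [apply Rmult_le_pos|]; lra.
Qed.
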